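(* Let $Q$ be a quadrilateral in $K^2$. The $Q$-pairs of bisectors of $Q$ are precisely the degenerations of the conics in the pencil of $Q$.
   Context: $K$ is a field of characteristic $\neq 2$; we work in $K^2$. Every line $L$ has an equation $tX-uY+v=0$ normalized so that $t=1$ if $u=0$ and $u=1$ if $u\neq 0$; coefficients denoted $t_L,u_L,v_L$. A quadrilateral $Q=ABA'B'$ consists of four distinct lines $A,B,A',B'$ (sides), not all through one point, with adjacent sides ($A,B$; $B,A'$; $A',B'$; $B',A$) not parallel; opposite sides ($A,A'$; $B,B'$) may be parallel. Vertices: $A\cap B$, $B\cap A'$, $A'\cap B'$, $B'\cap A$ (two may coincide if three sides are concurrent). The centroid of $Q$ is the average of the four vertices (equivalently the midpoint of the midpoints of the diagonals). Let $\alpha=t_Au_Bu_{A'}u_{B'}-u_At_Bu_{A'}u_{B'}+u_Au_Bt_{A'}u_{B'}-u_Au_Bu_{A'}t_{B'}$, $\beta=t_Au_Bt_{A'}u_{B'}-u_At_Bu_{A'}t_{B'}$, $\gamma=t_At_Bt_{A'}u_{B'}-t_At_Bu_{A'}t_{B'}+t_Au_Bt_{A'}t_{B'}-u_At_Bt_{A'}t_{B'}$, and $\langle \mathbf v,\mathbf w\rangle_Q=\mathbf v^T\begin{pmatrix}\gamma&-\beta\\-\beta&\alpha\end{pmatrix}\mathbf w$ on $K^2$. Lines $\ell_1,\ell_2$ are $Q$-orthogonal if $\langle (u_{\ell_1},t_{\ell_1}),(u_{\ell_2},t_{\ell_2})\rangle_Q=0$. A line $\ell$ crosses a pair $\{\ell_1,\ell_2\}$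 if distinct from both and not parallel to both; $\mathrm{mid}_{\{\ell_1,\ell_2\}}(\ell)$ is the midpoint of the points where $\ell$ meets $\ell_1,\ell_2$ (the point at infinity of $\ell$ if one is at infinity). $\ell$ bisects $Q$ (is a bisector of $Q$) if $\mathrm{mid}_{\mathsf P}(\ell)$ is the same for all pairs $\mathsf P$ among $\{A,A'\},\{B,B'\}$ that $\ell$ crosses; this common point is the midpoint of the bisector. A pair $\{\ell_1,\ell_2\}$ of bisectors (possibly $\ell_1=\ell_2$) is $Q$-antipodal if the midpoint of their midpoints is the centroid of $Q$, and is a $Q$-pair if it is $Q$-antipodal and $Q$-orthogonal. A conic is a quadratic polynomial in $K[X,Y]$. Let $f_1$ be a product of linear polynomials defining $A$ and $A'$, and $f_2$ a product of linear polynomials defining $B$ and $B'$. The pencil of $Q$ is $\{af_1+bf_2: a,b\in K \text{ not both } 0\}$. A pair of lines $\{\ell_1,\ell_2\}$ (possibly $\ell_1=\ell_2$) is a degeneration of a conic $f$ if there is $\lambda\in K$ such that the zero set of $f+\lambda$ is $\ell_1\cup\ell_2$. *)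

(* Defs.v *)
From HB Require Import structures.
From mathcomp Require Import all_boot all_order all_algebra.
Set Implicit Arguments. Unset Strict Implicit. Unset Printing Implicit Defensive.
Import Order.TTheory GRing.Theory.
Local Open Scope ring_scope.

Section Quad.
Variable K : fieldType.

(* A line of K^2 with normalized equation  t X - u Y + v = 0,
   where t = 1 if u = 0, and u = 1 if u <> 0. *)
Record line := Line {
  l_t : K; l_u : K; l_v : K;
  l_norm : ((l_u == 0) && (l_t == 1)) || (l_u == 1) }.

Definition point := (K * K)%type.

Definition on_line (l : line) (p : point) : Prop :=
  l_t l * p.1 - l_u l * p.2 + l_v l = 0.

Definition parallel (l1 l2 : line) : bool :=
  l_t l1 * l_u l2 - l_u l1 * l_t l2 == 0.

Definition meet (l1 l2 : line) : point :=
  let D := l_u l1 * l_t l2 - l_t l1 * l_u l2 in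
  ((l_v l1 * l_u l2 - l_u l1 * l_v l2) / D,
   (l_t l2 * l_v l1 - l_t l1 * l_v l2) / D).

Definition midpoint (p q : point) : point :=
  ((p.1 + q.1) / 2, (p.2 + q.2) / 2).

Definition quadrilateral (A B A' B' : line) : Prop :=
  [/\ A <> B, A <> A', A <> B' & B <> A'] /\ [/\ B <> B' & A' <> B'] /\
  ~ (exists p, [/\ on_line A p, on_line B p, on_line A' p & on_line B' p]) /\
  [/\ ~ parallel A B, ~ parallel B A', ~ parallel A' B' & ~ parallel B' A].

Definition centroid (A B A' B' : line) : point :=
  let v1 := meet A B in let v2 := meet B A' in
  let v3 := meet A' B' in let v4 := meet B' A in
  ((v1.1 + v2.1 + v3.1 + v4.1) / 4, (v1.2 + v2.2 + v3.2 + v4.2) / 4).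

Definition qalpha (A B A' B' : line) : K :=
  l_t A * l_u B * l_u A' * l_u B' - l_u A * l_t B * l_u A' * l_u B'
  + l_u A * l_u B * l_t A' * l_u B' - l_u A * l_u B * l_u A' * l_t B'.
Definition qbeta (A B A' B' : line) : K :=
  l_t A * l_u B * l_t A' * l_u B' - l_u A * l_t B * l_u A' * l_t B'.
Definition qgamma (A B A' B' : line) : K :=
  l_t A * l_t B * l_t A' * l_u B' - l_t A * l_t B * l_u A' * l_t B'
  + l_t A * l_u B * l_t A' * l_t B' - l_u A * l_t B * l_t A' * l_t B'.

Definition qform (A B A' B' : line) (v w : K * K) : K :=
  v.1 * (qgamma A B A' B' * w.1 - qbeta A B A' B' * w.2)
  + v.2 * (- qbeta A B A' B' * w.1 + qalpha A B A' B' * w.2).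

Definition Q_orthogonal (A B A' B' l1 l2 : line) : Prop :=
  qform A B A' B' (l_u l1, l_t l1) (l_u l2, l_t l2) = 0.

Definition crosses (l l1 l2 : line) : Prop :=
  [/\ l <> l1, l <> l2 & ~ (parallel l l1 /\ parallel l l2)].

(* mid_{l1,l2}(l): None stands for the point at infinity of l *)
Definition mid (l l1 l2 : line) : option point :=
  if parallel l l1 || parallel l l2 then None
  else Some (midpoint (meet l l1) (meet l l2)).

Definition bisects (A B A' B' l : line) : Prop :=
  crosses l A A' -> crosses l B B' -> mid l A A' = mid l B B'.

(* m is the midpoint of the bisector l: the common value of mid over the
   crossed pairs (l always crosses at least one pair of opposite sides) *)
Definition bisector_mid (A B A' B' l : line) (m : option point) : Prop :=
  (crosses l A A' /\ mid l A A' = m) \/ (crosses l B B' /\ mid l B B' = m).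

Definition Q_antipodal (A B A' B' l1 l2 : line) : Prop :=
  bisects A B A' B' l1 /\ bisects A B A' B' l2 /\
  exists m1 m2, [/\ bisector_mid A B A' B' l1 (Some m1),
                    bisector_mid A B A' B' l2 (Some m2) &
                    midpoint m1 m2 = centroid A B A' B'].

Definition Q_pair (A B A' B' l1 l2 : line) : Prop :=
  Q_antipodal A B A' B' l1 l2 /\ Q_orthogonal A B A' B' l1 l2.

Definition lin (l : line) (p : point) : K := l_t l * p.1 - l_u l * p.2 + l_v l.

Definition pencil_conic (A B A' B' : line) (a b : K) (p : point) : K :=
  a * (lin A p * lin A' p) + b * (lin B p * lin B' p).

Definition degeneration (f : point -> K) (l1 l2 : line) : Prop :=
  exists lam : K, forall p : point, f p + lam = 0 <-> (on_line l1 p \/ on_line l2 p).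

End Quad.

(* Main.v *)
Require Import Defs.
From HB Require Import structures.
From mathcomp Require Import all_boot all_order all_algebra.
From mathcomp Require Import ring.
From Stdlib Require Import Classical.
Import GRing.Theory.
Local Open Scope ring_scope.
Set Implicit Arguments. Unset Strict Implicit. Unset Printing Implicit Defensive.

Section S.
Variable K : fieldType.
Variable hK2 : (2 : K) != 0.
Implicit Types (l X Y : line K) (p q w z d : K * K).

Definition lin0 l w : K := l_t l * w.1 - l_u l * w.2.
Definition dir l : K * K := (l_u l, l_t l).
Definition base l : K * K := ((l_u l - 1) * l_v l, l_u l * l_v l).
Definition det v w : K := v.1 * w.2 - v.2 * w.1.
Definition padd p w : K * K := (p.1 + w.1, p.2 + w.2).
Definition psc (s : K) w : K * K := (s * w.1, s * w.2).
Definition psub p q : K * K := (p.1 - q.1, p.2 - q.2).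

Lemma eq_from (c : K) {e a b : K} : e = 0 -> a - b = c * e -> a = b.
Proof. by move=> he; rewrite he mulr0 => /eqP; rewrite subr_eq0 => /eqP. Qed.
Arguments eq_from c {e a b}.

Lemma normP l : (l_u l = 0 /\ l_t l = 1) \/ l_u l = 1.
Proof.
case: l => t u v /= /orP [/andP [/eqP -> /eqP ->]|/eqP ->]; by [left|right].
Qed.

Lemma line_eq l1 l2 : l_t l1 = l_t l2 -> l_u l1 = l_u l2 -> l_v l1 = l_v l2 -> l1 = l2.
Proof.
case: l1 => t u v h; case: l2 => t' u' v' h' /= ? ? ?; subst.
by rewrite (bool_irrelevance h h').
Qed.

Lemma base_on l : lin l (base l) = 0.
Proof. rewrite /lin /base /=; case: (normP l) => [[-> ->]|->]; ring. Qed.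

Lemma lin0_dir l : lin0 l (dir l) = 0.
Proof. rewrite /lin0 /dir /=; ring. Qed.

Lemma lin_padd l p w : lin l (padd p w) = lin l p + lin0 l w.
Proof. rewrite /lin /lin0 /padd /=; ring. Qed.

Lemma lin0_psc l s w : lin0 l (psc s w) = s * lin0 l w.
Proof. rewrite /lin0 /psc /=; ring. Qed.

Lemma par_lin0 l X : parallel l X = (lin0 X (dir l) == 0).
Proof.
have ->: lin0 X (dir l) = - (l_t l * l_u X - l_u l * l_t X) by rewrite /lin0 /dir /=; ring.
by rewrite oppr_eq0.
Qed.

Lemma par_same l1 l2 : parallel l1 l2 -> l_t l1 = l_t l2 /\ l_u l1 = l_u l2.
Proof.
rewrite /parallel; case: (normP l1) => [[-> ->]|->]; case: (normP l2) => [[-> ->]|->];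
rewrite ?mul1r ?mulr1 ?mul0r ?mulr0 ?subr0 ?sub0r ?oppr_eq0 ?oner_eq0 //.
by rewrite subr_eq0 => /eqP ->.
Qed.

Lemma par_dir l X Y : lin0 X (dir l) = 0 -> lin0 Y (dir l) = 0 -> parallel X Y.
Proof.
rewrite /lin0 /dir /parallel /=; case: (normP l) => [[-> ->]|->] hX hY; apply/eqP.
- have hX' : l_u X = 0 by move: hX; rewrite mulr0 mulr1 sub0r => /eqP; rewrite oppr_eq0 => /eqP.
  have hY' : l_u Y = 0 by move: hY; rewrite mulr0 mulr1 sub0r => /eqP; rewrite oppr_eq0 => /eqP.
  rewrite hX' hY'; ring.
- have hX' : l_t X = l_u X * l_t l by move: hX; rewrite mulr1 => /eqP; rewrite subr_eq0 => /eqP.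
  have hY' : l_t Y = l_u Y * l_t l by move: hY; rewrite mulr1 => /eqP; rewrite subr_eq0 => /eqP.
  rewrite hX' hY'; ring.
Qed.

Lemma param l p : on_line l p -> exists s, p = padd (base l) (psc s (dir l)).
Proof.
rewrite /on_line /padd /base /psc /dir; case: p => x y /=.
case: (normP l) => [[-> ->]|->] h.
- exists y; congr pair; last by ring.
  by apply: (eq_from (1) h); ring.
- exists x; congr pair; first by ring.
  by apply: (eq_from (-1) h); ring.
Qed.

Lemma param_inj l s s' : padd (base l) (psc s (dir l)) = padd (base l) (psc s' (dir l)) -> s = s'.
Proof.
rewrite /padd /psc /dir; case=> h1 h2; case: (normP l) => [[_ ht]|hu].
- by move: h2; rewrite ht !mulr1 => /addrI.
- by move: h1; rewrite hu !mulr1 => /addrI.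
Qed.

Lemma on_lin l p : on_line l p <-> lin l p = 0.
Proof. by []. Qed.

Lemma meet_uniq l1 l2 p : ~~ parallel l1 l2 -> lin l1 p = 0 -> lin l2 p = 0 -> meet l1 l2 = p.
Proof.
rewrite /parallel /lin /meet => hp h1 h2.
have hD : l_u l1 * l_t l2 - l_t l1 * l_u l2 != 0.
  by apply: contra hp => /eqP h; rewrite -oppr_eq0 -h; apply/eqP; ring.
case: p h1 h2 => x y /= h1 h2; congr pair.
- apply: (mulIf hD); rewrite mulfVK //.
  apply: (eq_from (l_u l2) h1); apply: (eq_from (- l_u l1) h2); ring.
- apply: (mulIf hD); rewrite mulfVK //.
  apply: (eq_from (l_t l2) h1); apply: (eq_from (- l_t l1) h2); ring.
Qed.


Lemma meet_on l1 l2 : ~~ parallel l1 l2 -> lin l1 (meet l1 l2) = 0 /\ lin l2 (meet l1 l2) = 0.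
Proof.
rewrite /parallel /lin /meet /= => hp.
have hD : l_u l1 * l_t l2 - l_t l1 * l_u l2 != 0.
  by apply: contra hp => /eqP h; rewrite -oppr_eq0 -h; apply/eqP; ring.
split; field; done.
Qed.

Lemma meetC l1 l2 : ~~ parallel l1 l2 -> meet l2 l1 = meet l1 l2.
Proof.
move=> hp; have [h1 h2] := meet_on hp; apply: meet_uniq => //.
by apply: contra hp => /eqP h; rewrite /parallel -oppr_eq0 -h; apply/eqP; ring.
Qed.

Definition sp l X := - lin X (base l) / lin0 X (dir l).

Lemma meet_param l X : ~~ parallel l X -> meet l X = padd (base l) (psc (sp l X) (dir l)).
Proof.
move=> hp; have hc : lin0 X (dir l) != 0 by rewrite -par_lin0.
apply: meet_uniq => //; rewrite lin_padd lin0_psc ?lin0_dir ?base_on /sp; first ring.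
field; done.
Qed.

Lemma par_common l X : parallel l X -> lin X (base l) = 0 -> l = X.
Proof.
move=> /par_same [ht hu] h; apply: line_eq => //.
have h0 := base_on l; move: h h0; rewrite /lin -ht -hu => h h0.
apply: (eq_from (-1) h); apply: (eq_from 1 h0); ring.
Qed.

Lemma quad_zero (e2 e1 e0 : K) : (forall s, e2 * s ^+ 2 + e1 * s + e0 = 0) ->
  [/\ e2 = 0, e1 = 0 & e0 = 0].
Proof.
move=> h; have h0 := h 0; have h1 := h 1; have hm := h (-1).
have E0 : e0 = 0 by rewrite -h0; ring.
have E2 : 2 * e2 = 0 by rewrite -[LHS]addr0 -{2}h1 -{1}(oppr0) -{1}hm E0; ring.
have E2' : e2 = 0 by move/eqP: E2; rewrite mulf_eq0 (negPf hK2) => /eqP.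
split => //; rewrite -h1 E0 E2'; ring.
Qed.

Definition Hf X Y w := lin0 X w * lin0 Y w.
Definition Df X Y p w := lin X p * lin0 Y w + lin Y p * lin0 X w.
Definition Hpf X Y w z := lin0 X w * lin0 Y z + lin0 X z * lin0 Y w.

Lemma midpoint_lin l p q : lin l (midpoint p q) = (lin l p + lin l q) / 2.
Proof. rewrite /lin /midpoint /=; field; done. Qed.

Lemma mid_some l X X' : ~~ parallel l X -> ~~ parallel l X' ->
  mid l X X' = Some (padd (base l) (psc ((sp l X + sp l X') / 2) (dir l))).
Proof.
move=> h1 h2; rewrite /mid (negPf h1) (negPf h2) /= (meet_param h1) (meet_param h2).
congr Some; rewrite /midpoint /padd /psc /=; congr pair; field; done.
Qed.


Lemma parC X Y : parallel X Y = parallel Y X.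
Proof.
rewrite /parallel; have ->: l_t Y * l_u X - l_u Y * l_t X = - (l_t X * l_u Y - l_u X * l_t Y) by ring.
by rewrite oppr_eq0.
Qed.

Lemma det2 (a b x1 y1 x2 y2 : K) : (a != 0 \/ b != 0) -> a * x1 + b * y1 = 0 ->
  a * x2 + b * y2 = 0 -> x1 * y2 - y1 * x2 = 0.
Proof.
move=> hab h1 h2; case: hab => hn.
- apply: (mulfI hn); rewrite mulr0.
  apply: (eq_from y2 h1); apply: (eq_from (- y1) h2); ring.
- apply: (mulfI hn); rewrite mulr0.
  apply: (eq_from (- x2) h1); apply: (eq_from x1 h2); ring.
Qed.

Lemma noncross l X X' : ~ crosses l X X' ->
  Hf X X' (dir l) = 0 /\ Df X X' (base l) (dir l) = 0.
Proof.
move=> hc.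
case: (classic (l = X)) => [<-|h1].
  by rewrite /Hf /Df lin0_dir base_on; split; ring.
case: (classic (l = X')) => [<-|h2].
  by rewrite /Hf /Df lin0_dir base_on; split; ring.
case: (classic (parallel l X /\ parallel l X')) => [[p1 p2]|h3].
  move: p1 p2; rewrite !par_lin0 => /eqP p1 /eqP p2.
  by rewrite /Hf /Df p1 p2; split; ring.
by case: hc; split.
Qed.

Lemma crossC l X X' : crosses l X X' -> crosses l X' X.
Proof. by case=> h1 h2 h3; split => // -[? ?]; apply: h3. Qed.

Lemma HfC X Y w : Hf X Y w = Hf Y X w.
Proof. rewrite /Hf; ring. Qed.
Lemma DfC X Y p w : Df X Y p w = Df Y X p w.
Proof. rewrite /Df; ring. Qed.

Lemma side_helper l X X' Y Y' (a b : K) : crosses l X X' -> parallel l X ->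
  lin0 Y (dir l) != 0 -> lin0 Y' (dir l) != 0 ->
  a * Hf X X' (dir l) + b * Hf Y Y' (dir l) = 0 ->
  a * Df X X' (base l) (dir l) + b * Df Y Y' (base l) (dir l) = 0 ->
  (a != 0 \/ b != 0) -> False.
Proof.
move=> hc hp hY hY' hH hD hab.
have c0 : lin0 X (dir l) = 0 by apply/eqP; rewrite -par_lin0.
have c1 : lin0 X' (dir l) != 0.
  rewrite -par_lin0; apply/negP => p'; by case: hc => _ _; apply.
have b0 : b = 0.
  move: hH; rewrite /Hf c0 mul0r mulr0 add0r => /eqP.
  by rewrite !mulf_eq0 (negPf hY) (negPf hY') !orbF => /eqP.
have a0 : a != 0 by case: hab => //; rewrite b0 eqxx.
move: hD; rewrite b0 mul0r addr0 /Df c0 mulr0 addr0 => /eqP.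
rewrite !mulf_eq0 (negPf a0) (negPf c1) /= orbF => /eqP h.
have := par_common hp h; by case: hc.
Qed.

End S.

Arguments eq_from {K} c {e a b}.
Lemma four_nz (K : fieldType) : (2:K) != 0 -> (4:K) != 0.
Proof. move=> h; have ->: (4:K) = 2 * 2 by ring. by rewrite mulf_neq0. Qed.
Ltac fld := field; repeat (apply/andP; split); try assumption; try (apply: four_nz; assumption).
Section S.
Variable K : fieldType.
Variable hK2 : (2 : K) != 0.
Implicit Types (l X Y : line K) (p q w z d : K * K).
Section Q.
Variables A B A' B' : line K.
Hypotheses (nAB : ~~ parallel A B) (nBA' : ~~ parallel B A')
  (nA'B' : ~~ parallel A' B') (nB'A : ~~ parallel B' A).

Definition GG a b p := a * (lin A p * lin A' p) + b * (lin B p * lin B' p).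
Definition HG a b w := a * Hf A A' w + b * Hf B B' w.
Definition DG a b p w := a * Df A A' p w + b * Df B B' p w.
Definition HpG a b w z := a * Hpf A A' w z + b * Hpf B B' w z.

Lemma nBA : ~~ parallel B A. Proof. by rewrite parC. Qed.
Lemma nA'B : ~~ parallel A' B. Proof. by rewrite parC. Qed.
Lemma nB'A' : ~~ parallel B' A'. Proof. by rewrite parC. Qed.
Lemma nAB' : ~~ parallel A B'. Proof. by rewrite parC. Qed.

Lemma npar_dir l X Y : ~~ parallel X Y -> parallel l X -> lin0 Y (dir l) != 0.
Proof.
move=> hXY hX; apply/negP => /eqP hY; move/negP: hXY; apply; apply: (par_dir (l:=l)) => //.
by apply/eqP; rewrite -par_lin0.
Qed.

Lemma par_mid l X Y Y' : ~~ parallel X Y -> ~~ parallel X Y' -> parallel l X ->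
  mid l Y Y' <> None.
Proof.
move=> h1 h2 hX; rewrite /mid; case: ifP => // /orP [] hp _.
- by move: (npar_dir h1 hX); rewrite -par_lin0 hp.
- by move: (npar_dir h2 hX); rewrite -par_lin0 hp.
Qed.

Lemma mid_par l X X' : parallel l X -> mid l X X' = None.
Proof. by rewrite /mid => ->. Qed.
Lemma mid_par' l X X' : parallel l X' -> mid l X X' = None.
Proof. by rewrite /mid => ->; rewrite orbT. Qed.

Lemma bisect_const l : bisects A B A' B' l ->
  Hf B B' (dir l) * Df A A' (base l) (dir l) - Hf A A' (dir l) * Df B B' (base l) (dir l) = 0.
Proof.
move=> hb.
case: (classic (crosses l A A')) => cA; last first.
  by have [-> ->] := noncross cA; ring.
case: (classic (crosses l B B')) => cB; last first.
  by have [-> ->] := noncross cB; ring.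
have hm := hb cA cB.
have hA : ~~ parallel l A.
  apply/negP => p; move: hm; rewrite (mid_par _ p) => /esym; exact: par_mid nAB nAB' p.
have hA' : ~~ parallel l A'.
  apply/negP => p; move: hm; rewrite (mid_par' _ p) => /esym; exact: par_mid nA'B nA'B' p.
have hB : ~~ parallel l B.
  apply/negP => p; move: hm; rewrite (mid_par _ p); exact: par_mid nBA nBA' p.
have hB' : ~~ parallel l B'.
  apply/negP => p; move: hm; rewrite (mid_par' _ p); exact: par_mid nB'A nB'A' p.
move: hm; rewrite !(mid_some hK2) // => /Some_inj /param_inj E.
move: hA hA' hB hB'; rewrite !par_lin0 => hA hA' hB hB'.
transitivity (-2 * (lin0 A (dir l) * lin0 A' (dir l) * lin0 B (dir l) * lin0 B' (dir l)) *
   ((sp l A + sp l A') / 2 - (sp l B + sp l B') / 2)); last by rewrite E subrr mulr0.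
by rewrite /sp /Hf /Df; fld.
Qed.


Lemma lin0_det l w : lin0 l w = - det (dir l) w.
Proof. rewrite /lin0 /det /dir /=; ring. Qed.

Lemma lin0_padd l w z : lin0 l (padd w z) = lin0 l w + lin0 l z.
Proof. rewrite /lin0 /padd /=; ring. Qed.

Lemma GG_padd a b p w : GG a b (padd p w) = GG a b p + DG a b p w + HG a b w.
Proof. rewrite /GG /DG /HG /Df /Hf /lin /lin0 /padd /=; ring. Qed.
Lemma DG_padd a b p z w : DG a b (padd p z) w = DG a b p w + HpG a b z w.
Proof. rewrite /HpG /DG /Hpf /Df /lin /lin0 /padd /=; ring. Qed.
Lemma HG_psc a b s w : HG a b (psc s w) = s ^+ 2 * HG a b w.
Proof. rewrite /HG /Hf /lin0 /psc /=; ring. Qed.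
Lemma DG_psc a b p s w : DG a b p (psc s w) = s * DG a b p w.
Proof. rewrite /DG /Df /lin0 /psc /=; ring. Qed.
Lemma HpG_psc a b s z w : HpG a b (psc s z) w = s * HpG a b z w.
Proof. rewrite /HpG /Hpf /lin0 /psc /=; ring. Qed.
Lemma HpG_diag a b w : HpG a b w w = 2 * HG a b w.
Proof. rewrite /HpG /HG /Hpf /Hf; ring. Qed.
Lemma HpGC a b w z : HpG a b w z = HpG a b z w.
Proof. rewrite /HpG /Hpf; ring. Qed.
Lemma DG_cramer a b p d1 d2 w :
  det d1 d2 * DG a b p w = det w d2 * DG a b p d1 + det d1 w * DG a b p d2.
Proof. rewrite /DG /Df /lin0 /det; ring. Qed.
Lemma HpG_cramer a b z d1 d2 w :
  det d1 d2 * HpG a b z w = det w d2 * HpG a b z d1 + det d1 w * HpG a b z d2.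
Proof. rewrite /HpG /Hpf /lin0 /det; ring. Qed.
Lemma quadC a b d1 d2 w : det d1 d2 ^+ 2 * HG a b w = det w d2 ^+2 * HG a b d1
  + det w d2 * det d1 w * HpG a b d1 d2 + det d1 w ^+ 2 * HG a b d2.
Proof. rewrite /HG /Hf /HpG /Hpf /lin0 /det. ring. Qed.
Lemma I1 d e : Hf B B' d * Hf A A' e - Hf A A' d * Hf B B' e = det d e * qform A B A' B' d e.
Proof. rewrite /Hf /lin0 /det /qform /qalpha /qbeta /qgamma. ring. Qed.
Lemma I2 d w : Hf B B' d * Hpf A A' d w - Hf A A' d * Hpf B B' d w = det d w * qform A B A' B' d d.
Proof. rewrite /Hf /Hpf /lin0 /det /qform /qalpha /qbeta /qgamma. ring. Qed.

Lemma on_param l s : on_line l (padd (base l) (psc s (dir l))).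
Proof. by rewrite /on_line -/(lin l _) lin_padd lin0_psc lin0_dir base_on; ring. Qed.

Lemma vanish_line a b lam l : (forall p, on_line l p -> GG a b p + lam = 0) ->
  [/\ HG a b (dir l) = 0, DG a b (base l) (dir l) = 0 & GG a b (base l) + lam = 0].
Proof.
move=> h; apply: (quad_zero hK2) => s.
have := h _ (on_param l s); rewrite GG_padd DG_psc HG_psc => h'.
apply: (eq_from 1 h'); ring.
Qed.

Lemma const_shift a b P d s : HG a b d = 0 -> DG a b P d = 0 ->
  GG a b (padd P (psc s d)) = GG a b P /\ DG a b (padd P (psc s d)) d = 0.
Proof.
move=> hH hD; rewrite GG_padd DG_psc HG_psc DG_padd HpG_psc HpG_diag hH hD; split; ring.
Qed.

Lemma HG_nz a b : (a != 0 \/ b != 0) -> (forall w, HG a b w = 0) -> False.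
Proof.
move=> hab h.
have hb : b = 0.
  have := h (dir A); rewrite /HG /Hf lin0_dir mul0r mulr0 add0r => /eqP.
  rewrite !mulf_eq0 -!par_lin0 (negPf nAB) (negPf nAB') !orbF => /eqP //.
have ha : a = 0.
  have := h (dir B); rewrite /HG /Hf (lin0_dir B) mul0r mulr0 addr0 => /eqP.
  rewrite !mulf_eq0 -!par_lin0 (negPf nBA) (negPf nBA') !orbF => /eqP //.
by case: hab; rewrite ?ha ?hb eqxx.
Qed.

Lemma QQnz l : Hf A A' (dir l) != 0 \/ Hf B B' (dir l) != 0.
Proof.
case: (classic (Hf A A' (dir l) = 0 /\ Hf B B' (dir l) = 0)); last first.
  move=> h; case: (classic (Hf A A' (dir l) = 0)) => h1; last by left; apply/eqP.
  by right; apply/eqP => h2; apply: h.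
rewrite /Hf => -[/eqP h1 /eqP h2]; exfalso.
move: h1 h2; rewrite !mulf_eq0 => /orP [] /eqP h1 /orP [] /eqP h2.
- by move: nAB; rewrite (par_dir h1 h2).
- by move: nAB'; rewrite (par_dir h1 h2).
- by move: nA'B; rewrite (par_dir h1 h2).
- by move: nA'B'; rewrite (par_dir h1 h2).
Qed.

Lemma det_par l1 l2 : ~~ parallel l1 l2 -> det (dir l1) (dir l2) != 0.
Proof.
move=> hp; have ->: det (dir l1) (dir l2) = - (l_t l1 * l_u l2 - l_u l1 * l_t l2).
  by rewrite /det /dir /=; ring.
by rewrite oppr_eq0.
Qed.

Lemma padd_psub p q : padd q (psub p q) = p.
Proof. by case: p => x y; rewrite /padd /psub /=; congr pair; ring. Qed.

Lemma lin_on_det l P w : lin l P = 0 -> lin l (padd P w) = - det (dir l) w.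
Proof. by move=> h; rewrite lin_padd h add0r lin0_det. Qed.

Lemma np_ident a b l1 l2 : (a != 0 \/ b != 0) -> ~~ parallel l1 l2 ->
  HG a b (dir l1) = 0 -> HG a b (dir l2) = 0 ->
  DG a b (base l1) (dir l1) = 0 -> DG a b (base l2) (dir l2) = 0 ->
  exists k, k != 0 /\ forall p, GG a b p - GG a b (meet l1 l2) = k * (lin l1 p * lin l2 p).
Proof.
move=> hab hp hH1 hH2 hD1 hD2.
have [X1 X2] := meet_on hp.
have [s1 E1] := param X1; have [s2 E2] := param X2.
have hX1 : DG a b (meet l1 l2) (dir l1) = 0 by rewrite E1; case: (const_shift s1 hH1 hD1).
have hX2 : DG a b (meet l1 l2) (dir l2) = 0 by rewrite E2; case: (const_shift s2 hH2 hD2).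
have hD := det_par hp.
have hk : HpG a b (dir l1) (dir l2) != 0.
  apply/negP => /eqP h0; apply: (HG_nz hab) => w.
  have := quadC a b (dir l1) (dir l2) w; rewrite hH1 hH2 h0 !mulr0 !add0r.
  by move/eqP; rewrite mulf_eq0 expf_eq0 (negPf hD) andbF /= => /eqP.
exists (- HpG a b (dir l1) (dir l2) / det (dir l1) (dir l2) ^+ 2); split.
  by rewrite mulf_neq0 ?oppr_eq0 ?invr_eq0 ?expf_neq0.
move=> p; set X := meet l1 l2; set w := psub p X.
have hp' : p = padd X w by rewrite padd_psub.
have hDw : DG a b X w = 0.
  have := DG_cramer a b X (dir l1) (dir l2) w; rewrite hX1 hX2 !mulr0 addr0 => /eqP.
  by rewrite mulf_eq0 (negPf hD) /= => /eqP.
have hHw : HG a b w = det w (dir l2) * det (dir l1) w * HpG a b (dir l1) (dir l2) / det (dir l1) (dir l2) ^+ 2.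
  apply: (mulfI (expf_neq0 2 hD)); rewrite quadC hH1 hH2; field; done.
rewrite {1}hp' GG_padd hDw hHw {1}hp' (lin_on_det _ X1) {1}hp' (lin_on_det _ X2).
rewrite /det; field; done.
Qed.

Definition nvec l : K * K := (1 - l_u l, l_u l).

Lemma det_nvec l : det (dir l) (nvec l) != 0.
Proof.
rewrite /det /dir /nvec /=; case: (normP l) => [[-> ->]|->].
- by rewrite !mul0r mul1r subr0 sub0r oppr_eq0 oner_eq0.
- by rewrite subrr !mulr0 mul1r subr0 oner_eq0.
Qed.

Lemma par_formulas a b l P : HG a b (dir l) = 0 -> (forall w, HpG a b (dir l) w = 0) ->
  DG a b P (dir l) = 0 -> forall w,
  det (dir l) (nvec l) * DG a b P w = det (dir l) w * DG a b P (nvec l) /\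
  det (dir l) (nvec l) ^+ 2 * HG a b w = det (dir l) w ^+ 2 * HG a b (nvec l).
Proof.
move=> hH hHp hD w; split.
  by rewrite DG_cramer hD mulr0 add0r.
by rewrite quadC hH hHp !mulr0 !add0r.
Qed.

Lemma HGn_nz a b l : (a != 0 \/ b != 0) -> HG a b (dir l) = 0 ->
  (forall w, HpG a b (dir l) w = 0) -> HG a b (nvec l) != 0.
Proof.
move=> hab hH hHp; apply/negP => /eqP h0; apply: (HG_nz hab) => w.
have := quadC a b (dir l) (nvec l) w; rewrite hH hHp h0 !mulr0 !add0r.
by move/eqP; rewrite mulf_eq0 expf_eq0 (negPf (det_nvec l)) andbF /= => /eqP.
Qed.

Lemma par_core a b l1 l2 : (a != 0 \/ b != 0) -> l_t l1 = l_t l2 -> l_u l1 = l_u l2 ->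
  HG a b (dir l1) = 0 -> (forall w, HpG a b (dir l1) w = 0) -> DG a b (base l1) (dir l1) = 0 ->
  det (dir l1) (nvec l1) * DG a b (base l1) (nvec l1) = (l_v l1 - l_v l2) * HG a b (nvec l1) ->
  exists k, k != 0 /\ forall p, GG a b p - GG a b (base l1) = k * (lin l1 p * lin l2 p).
Proof.
move=> hab ht hu hH hHp hD hrel.
have hn := HGn_nz hab hH hHp.
have hc := det_nvec l1.
exists (HG a b (nvec l1) / det (dir l1) (nvec l1) ^+ 2); split.
  by rewrite mulf_neq0 ?invr_eq0 ?expf_neq0.
move=> p; set P := base l1; set w := psub p P.
have [f1 f2] := par_formulas hH hHp hD w.
have hp' : p = padd P w by rewrite padd_psub.
have L1 : lin l1 p = - det (dir l1) w by rewrite hp' lin_on_det ?base_on.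
have L2 : lin l2 p = lin l1 p - (l_v l1 - l_v l2) by rewrite /lin -ht -hu; ring.
rewrite L2 L1 {1}hp' GG_padd.
have ->: DG a b P w = det (dir l1) w * DG a b P (nvec l1) / det (dir l1) (nvec l1).
  by apply: (mulfI hc); rewrite f1; field; done.
have ->: HG a b w = det (dir l1) w ^+ 2 * HG a b (nvec l1) / det (dir l1) (nvec l1) ^+ 2.
  by apply: (mulfI (expf_neq0 2 hc)); rewrite f2; field; done.
have ->: DG a b P (nvec l1) = (l_v l1 - l_v l2) * HG a b (nvec l1) / det (dir l1) (nvec l1).
  by apply: (mulfI hc); rewrite hrel; field; done.
field; done.
Qed.

Lemma hp_from a b d z : HG a b d = 0 -> HpG a b d z = 0 -> det d z != 0 ->
  forall w, HpG a b d w = 0.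
Proof.
move=> hH hz hd w; have := HpG_cramer a b d d z w.
rewrite HpG_diag hH hz !mulr0 addr0 => /eqP; rewrite mulf_eq0 (negPf hd) /= => /eqP //.
Qed.

Lemma chord_mid X Y Y' V W : lin X V = 0 -> lin X W = 0 -> lin Y V = 0 -> lin Y' W = 0 ->
  Df Y Y' (midpoint V W) (dir X) = 0.
Proof.
move=> /param [s1 ->] /param [s2 ->].
rewrite !lin_padd !lin0_psc => h1 h2.
apply: (eq_from (lin0 Y' (dir X)) h1); apply: (eq_from (lin0 Y (dir X)) h2).
rewrite /Df /lin /lin0 /midpoint /padd /psc /=; field; done.
Qed.

Lemma DG_mid a b p q w : DG a b (midpoint p q) w = (DG a b p w + DG a b q w) / 2.
Proof. rewrite /DG /Df /lin /midpoint /=; field; done. Qed.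

Lemma DG_zero_from a b M d e : DG a b M d = 0 -> DG a b M e = 0 -> det d e != 0 ->
  forall w, DG a b M w = 0.
Proof.
move=> h1 h2 hd w; have := DG_cramer a b M d e w; rewrite h1 h2 !mulr0 addr0 => /eqP.
by rewrite mulf_eq0 (negPf hd) /= => /eqP.
Qed.

Lemma det_dirs l X : det (dir l) (dir X) = lin0 X (dir l).
Proof. rewrite /det /dir /lin0 /=; ring. Qed.

Lemma lin_self X Y M : lin X M = 0 -> Df X Y M (dir X) = 0.
Proof. by move=> h; rewrite /Df h lin0_dir; ring. Qed.

Lemma cen_midA (v1 v2 v3 v4 : K * K) : ((v1.1 + v2.1 + v3.1 + v4.1) / 4, (v1.2 + v2.2 + v3.2 + v4.2) / 4) = midpoint (midpoint v1 v4) (midpoint v2 v3).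
Proof. rewrite /midpoint /=; congr pair; fld. Qed.
Lemma cen_midB (v1 v2 v3 v4 : K * K) : ((v1.1 + v2.1 + v3.1 + v4.1) / 4, (v1.2 + v2.2 + v3.2 + v4.2) / 4) = midpoint (midpoint v1 v2) (midpoint v3 v4).
Proof. rewrite /midpoint /=; congr pair; fld. Qed.

Lemma centroid_C a b l : (forall p, DG a b p (dir l) = 0) ->
  forall w, DG a b (centroid A B A' B') w = 0.
Proof.
move=> hd.
set V1 := meet A B; set V2 := meet B A'; set V3 := meet A' B'; set V4 := meet B' A.
have [a1 b1] : lin A V1 = 0 /\ lin B V1 = 0 by apply: meet_on.
have [b2 a2] : lin B V2 = 0 /\ lin A' V2 = 0 by apply: meet_on.
have [a3 b3] : lin A' V3 = 0 /\ lin B' V3 = 0 by apply: meet_on.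
have [b4 a4] : lin B' V4 = 0 /\ lin A V4 = 0 by apply: meet_on.
have mid0 : forall X V W, lin X V = 0 -> lin X W = 0 -> lin X (midpoint V W) = 0.
  by move=> X V W h1 h2; rewrite (midpoint_lin hK2) h1 h2; ring.
case: (classic (lin0 A (dir l) != 0 /\ lin0 A' (dir l) != 0)) => [[hA hA']|hAA].
- have C1 : centroid A B A' B' = midpoint (midpoint V1 V4) (midpoint V2 V3).
    exact: cen_midA.
  have M1 : forall w, DG a b (midpoint V1 V4) w = 0.
    apply: (DG_zero_from (hd _) _ (_ : det (dir l) (dir A) != 0)); last by rewrite det_dirs.
    by rewrite /DG lin_self ?mid0 // chord_mid //; ring.
  have M2 : forall w, DG a b (midpoint V2 V3) w = 0.
    apply: (DG_zero_from (hd _) _ (_ : det (dir l) (dir A') != 0)); last by rewrite det_dirs.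
    by rewrite /DG DfC lin_self ?mid0 // chord_mid //; ring.
  by move=> w; rewrite C1 DG_mid M1 M2; ring.
- have hB : lin0 B (dir l) != 0 /\ lin0 B' (dir l) != 0.
    case: (classic (lin0 A (dir l) = 0)) => hA.
      by split; apply/negP => /eqP h; [move: nAB | move: nAB']; rewrite (par_dir hA h).
    have hA' : lin0 A' (dir l) = 0.
      case: (classic (lin0 A' (dir l) = 0)) => // h; exfalso.
      by apply: hAA; split; apply/eqP.
    by split; apply/negP => /eqP h; [move: nA'B | move: nA'B']; rewrite (par_dir hA' h).
  case: hB => hB hB'.
  have C1 : centroid A B A' B' = midpoint (midpoint V1 V2) (midpoint V3 V4).
    exact: cen_midB.
  have M1 : forall w, DG a b (midpoint V1 V2) w = 0.
    apply: (DG_zero_from (hd _) _ (_ : det (dir l) (dir B) != 0)); last by rewrite det_dirs.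
    by rewrite /DG (@lin_self B) ?mid0 // chord_mid //; ring.
  have M2 : forall w, DG a b (midpoint V3 V4) w = 0.
    apply: (DG_zero_from (hd _) _ (_ : det (dir l) (dir B') != 0)); last by rewrite det_dirs.
    by rewrite /DG (DfC B) (@lin_self B') ?mid0 // DfC chord_mid //; ring.
  by move=> w; rewrite C1 DG_mid M1 M2; ring.
Qed.

Lemma bm_on l m : bisector_mid A B A' B' l (Some m) -> lin l m = 0.
Proof.
have key : forall X X', mid l X X' = Some m -> lin l m = 0.
  move=> X X'; rewrite /mid; case: ifP => // /negbT /norP [h1 h2] /Some_inj <-.
  rewrite (midpoint_lin hK2) (meet_on h1).1 (meet_on h2).1; ring.
by case=> -[_ /key].
Qed.

Lemma prop_lemma (x1 y1 x2 y2 u v : K) : (y2 != 0 \/ x2 != 0) -> x1 * y2 - y1 * x2 = 0 ->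
  x2 * u - y2 * v = 0 -> x1 * u - y1 * v = 0.
Proof.
move=> h h1 h2; case: h => hn.
- apply: (mulfI hn); rewrite mulr0; apply: (eq_from u h1); apply: (eq_from y1 h2); ring.
- apply: (mulfI hn); rewrite mulr0; apply: (eq_from v h1); apply: (eq_from x1 h2); ring.
Qed.

Lemma par_self X : parallel X X.
Proof. by rewrite /parallel; apply/eqP; ring. Qed.

Lemma cross_of l X X' : ~~ parallel l X -> ~~ parallel l X' -> crosses l X X'.
Proof.
move=> h1 h2; split.
- by move=> e; move: h1; rewrite e par_self.
- by move=> e; move: h2; rewrite e par_self.
- by case=> p1 _; move: h1; rewrite p1.
Qed.

Lemma root_sum1 X Y Y' l1 l2 (be lam k : K) : be != 0 -> ~~ parallel X Y -> ~~ parallel X Y' ->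
  (forall p, lin X p = 0 -> be * (lin Y p * lin Y' p) + lam = k * (lin l1 p * lin l2 p)) ->
  [/\ ~~ parallel l1 X, ~~ parallel l2 X &
     padd (meet l1 X) (meet l2 X) = padd (meet X Y) (meet X Y')].
Proof.
move=> hb hY hY' h.
have [E2 E1 _] : [/\ be * (lin0 Y (dir X) * lin0 Y' (dir X)) - k * (lin0 l1 (dir X) * lin0 l2 (dir X)) = 0,
   be * (lin Y (base X) * lin0 Y' (dir X) + lin Y' (base X) * lin0 Y (dir X))
     - k * (lin l1 (base X) * lin0 l2 (dir X) + lin l2 (base X) * lin0 l1 (dir X)) = 0 &
   be * (lin Y (base X) * lin Y' (base X)) + lam - k * (lin l1 (base X) * lin l2 (base X)) = 0].
  apply: (quad_zero hK2) => s.
  have := h _ (on_param X s); rewrite !lin_padd !lin0_psc => /eqP; rewrite -subr_eq0 => /eqP h'.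
  apply: (eq_from 1 h'); ring.
have cY : lin0 Y (dir X) != 0 by rewrite -par_lin0.
have cY' : lin0 Y' (dir X) != 0 by rewrite -par_lin0.
have hk : k * (lin0 l1 (dir X) * lin0 l2 (dir X)) != 0.
  have -> : k * (lin0 l1 (dir X) * lin0 l2 (dir X)) = be * (lin0 Y (dir X) * lin0 Y' (dir X)).
    by apply/esym; apply: (eq_from 1 E2); ring.
  by rewrite !mulf_neq0.
move: hk; rewrite !mulf_eq0 !negb_or => /andP [hk /andP [c1 c2]].
have p1 : ~~ parallel X l1 by rewrite par_lin0.
have p2 : ~~ parallel X l2 by rewrite par_lin0.
split; rewrite ?(parC l1) ?(parC l2) //.
rewrite (meetC p1) (meetC p2) !meet_param //.
have Es : sp X l1 + sp X l2 - (sp X Y + sp X Y') = 0.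
  apply: (eq_from (1 / (be * (lin0 Y (dir X) * lin0 Y' (dir X)))) E1).
  apply: (eq_from (- (lin l1 (base X) * lin0 l2 (dir X) + lin l2 (base X) * lin0 l1 (dir X))
     / (be * (lin0 l1 (dir X) * lin0 l2 (dir X)) * (lin0 Y (dir X) * lin0 Y' (dir X)))) E2).
  rewrite /sp; fld.
rewrite /padd /psc /=; congr pair.
- by apply: (eq_from (l_u X) Es); ring.
- by apply: (eq_from (l_t X) Es); ring.
Qed.

Lemma const_bisect a b l : (a != 0 \/ b != 0) -> HG a b (dir l) = 0 ->
  DG a b (base l) (dir l) = 0 -> bisects A B A' B' l.
Proof.
move=> hab hH hD cA cB.
have hab' : b != 0 \/ a != 0 by case: hab; [right|left].
have hA : ~~ parallel l A.
  by apply/negP => p; apply: (side_helper cA p (npar_dir nAB p) (npar_dir nAB' p) hH hD hab).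
have hA' : ~~ parallel l A'.
  apply/negP => p; apply: (side_helper (crossC cA) p (npar_dir nA'B p) (npar_dir nA'B' p) _ _ hab).
    by rewrite HfC.
  by rewrite DfC.
have hB : ~~ parallel l B.
  apply/negP => p; apply: (side_helper cB p (npar_dir nBA p) (npar_dir nBA' p) _ _ hab').
    by rewrite addrC.
  by rewrite addrC.
have hB' : ~~ parallel l B'.
  apply/negP => p; apply: (side_helper (crossC cB) p (npar_dir nB'A p) (npar_dir nB'A' p) _ _ hab').
    by rewrite HfC addrC.
  by rewrite DfC addrC.
rewrite !(mid_some hK2) //; congr Some; congr padd; congr psc.
have hdet := det2 hab hH hD.
move: hA hA' hB hB'; rewrite !par_lin0 => hA hA' hB hB'.
apply: (eq_from (1 / (2 * Hf A A' (dir l) * Hf B B' (dir l))) hdet).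
rewrite /sp /Hf /Df; fld.
Qed.

Lemma GG_line2 a b P d n s r : GG a b (padd P (padd (psc s d) (psc r n))) =
  GG a b P + s * DG a b P d + r * DG a b P n + s ^+ 2 * HG a b d + s * r * HpG a b d n + r ^+ 2 * HG a b n.
Proof. rewrite /GG /DG /HG /HpG /Df /Hf /Hpf /lin /lin0 /padd /psc /=; ring. Qed.

Lemma deg_from f l1 l2 (lam k : K) : k != 0 ->
  (forall p, f p + lam = k * (lin l1 p * lin l2 p)) -> degeneration f l1 l2.
Proof.
move=> hk h; exists lam => p; rewrite (h p); split.
- move/eqP; rewrite mulf_eq0 (negPf hk) /= mulf_eq0 => /orP [] /eqP e; by [left|right].
- by case=> e; rewrite /lin e ?mul0r ?mulr0.
Qed.

Lemma main_Q l1 l2 : Q_pair A B A' B' l1 l2 <->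
  exists a b : K, (a != 0 \/ b != 0) /\ degeneration (pencil_conic A B A' B' a b) l1 l2.
Proof.
split.
- move=> [[hb1 [hb2 [m1 [m2 [bm1 bm2 hmid]]]]] horth].
  pose a := Hf B B' (dir l1); pose b := - Hf A A' (dir l1).
  exists a, b.
  have hab : a != 0 \/ b != 0.
    by case: (QQnz l1) => h; [right; rewrite oppr_eq0 | left].
  split => //.
  have hH1 : HG a b (dir l1) = 0 by rewrite /HG /a /b; ring.
  have hD1 : DG a b (base l1) (dir l1) = 0.
    by have h := bisect_const hb1; rewrite /DG /a /b; apply: (eq_from 1 h); ring.
  have horth' : qform A B A' B' (dir l1) (dir l2) = 0 := horth.
  have hI : Hf B B' (dir l1) * Hf A A' (dir l2) - Hf A A' (dir l1) * Hf B B' (dir l2) = 0.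
    by rewrite I1 horth' mulr0.
  have hH2 : HG a b (dir l2) = 0 by rewrite /HG /a /b; apply: (eq_from 1 hI); ring.
  have hD2 : DG a b (base l2) (dir l2) = 0.
    have h2 := bisect_const hb2.
    have := prop_lemma (QQnz l2) hI h2 => h3.
    by rewrite /DG /a /b; apply: (eq_from 1 h3); ring.
  case: (boolP (parallel l1 l2)) => hp.
  + have [ht hu] := par_same hp.
    have hdir : dir l2 = dir l1 by rewrite /dir ht hu.
    have hqq : qform A B A' B' (dir l1) (dir l1) = 0 by rewrite -{2}hdir.
    have hHp : forall w, HpG a b (dir l1) w = 0.
      move=> w; have := I2 (dir l1) w; rewrite hqq mulr0 => h.
      by rewrite /HpG /a /b; apply: (eq_from 1 h); ring.
    have hDd : forall p, DG a b p (dir l1) = 0.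
      by move=> p; rewrite -(padd_psub p (base l1)) DG_padd hD1 HpGC hHp; ring.
    have hC := centroid_C hDd.
    have hL : 2 * lin l1 (centroid A B A' B') = l_v l1 - l_v l2.
      rewrite -hmid (midpoint_lin hK2) (bm_on bm1).
      have -> : lin l1 m2 = lin l2 m2 + (l_v l1 - l_v l2) by rewrite /lin ht hu; ring.
      rewrite (bm_on bm2); field; done.
    have hrel : det (dir l1) (nvec l1) * DG a b (base l1) (nvec l1) = (l_v l1 - l_v l2) * HG a b (nvec l1).
      have := hC (nvec l1).
      rewrite -{1}(padd_psub (centroid A B A' B') (base l1)) DG_padd => h.
      set z := psub (centroid A B A' B') (base l1) in h.
      have hz : det (dir l1) (nvec l1) * HpG a b z (nvec l1) = det (dir l1) z * (2 * HG a b (nvec l1)).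
        by rewrite HpGC HpG_cramer HpGC hHp HpG_diag; ring.
      have dz : det (dir l1) z = - lin l1 (centroid A B A' B').
        by rewrite -(padd_psub (centroid A B A' B') (base l1)) (lin_on_det _ (base_on l1)) opprK.
      have -> : DG a b (base l1) (nvec l1) = - HpG a b z (nvec l1) by apply: (eq_from 1 h); ring.
      by rewrite -hL mulrN hz dz; ring.
    have [k [hk hid]] := par_core hab ht hu hH1 hHp hD1 hrel.
    apply: (deg_from (lam := - GG a b (base l1)) hk) => p.
    by rewrite -hid.
  + have [k [hk hid]] := np_ident hab hp hH1 hH2 hD1 hD2.
    apply: (deg_from (lam := - GG a b (meet l1 l2)) hk) => p.
    by rewrite -hid.
- move=> [a [b [hab [lam hz]]]].
  have hv1 : forall p, on_line l1 p -> GG a b p + lam = 0 by move=> p h; apply/hz; left.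
  have hv2 : forall p, on_line l2 p -> GG a b p + lam = 0 by move=> p h; apply/hz; right.
  have [hH1 hD1 hG1] := vanish_line hv1.
  have [hH2 hD2 hG2] := vanish_line hv2.
  have hb1 := const_bisect hab hH1 hD1.
  have hb2 := const_bisect hab hH2 hD2.
  have [k [hk [hid horth]]] : exists k, k != 0 /\ (forall p, GG a b p + lam = k * (lin l1 p * lin l2 p))
      /\ Q_orthogonal A B A' B' l1 l2.
    case: (boolP (parallel l1 l2)) => hp.
    + have [ht hu] := par_same hp.
      have hdir : dir l2 = dir l1 by rewrite /dir ht hu.
      have hc := det_nvec l1.
      have hD2' : DG a b (base l2) (dir l1) = 0 by rewrite -hdir.
      have onl : forall p, GG a b p + lam = 0 -> l_v l1 = l_v l2 -> lin l1 p = 0.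
        move=> p h hv; have e12 : l1 = l2 by apply: line_eq.
        by case: (proj1 (hz p) h) => //; rewrite -e12.
      have hHp : forall w, HpG a b (dir l1) w = 0.
        case: (eqVneq (l_v l1) (l_v l2)) => hv.
        * case: (eqVneq (HpG a b (dir l1) (nvec l1)) 0) => h0; first by apply: hp_from hH1 h0 hc.
          exfalso.
          pose s := - (DG a b (base l1) (nvec l1) + HG a b (nvec l1)) / HpG a b (dir l1) (nvec l1).
          have : GG a b (padd (base l1) (padd (psc s (dir l1)) (psc 1 (nvec l1)))) + lam = 0.
            rewrite GG_line2 hH1 hD1.
            apply: (eq_from 1 hG1); rewrite /s; field; done.
          move/onl => /(_ hv).
          rewrite lin_padd base_on lin0_padd !lin0_psc lin0_dir lin0_det.
          by move/eqP; rewrite mulr0 mul1r !add0r oppr_eq0 (negPf hc).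
        * have w2 : HpG a b (dir l1) (psub (base l2) (base l1)) = 0.
            have e := DG_padd a b (base l1) (psub (base l2) (base l1)) (dir l1).
            by rewrite padd_psub hD2' hD1 add0r in e; rewrite HpGC -e.
          have hdz : det (dir l1) (psub (base l2) (base l1)) != 0.
            have := lin_on_det (psub (base l2) (base l1)) (base_on l1); rewrite padd_psub => e.
            rewrite -[det _ _]opprK -e oppr_eq0.
            have -> : lin l1 (base l2) = lin l2 (base l2) + (l_v l1 - l_v l2) by rewrite /lin ht hu; ring.
            by rewrite base_on add0r subr_eq0.
          exact: (hp_from hH1 w2 hdz).
      have hrel : det (dir l1) (nvec l1) * DG a b (base l1) (nvec l1) = (l_v l1 - l_v l2) * HG a b (nvec l1).
        case: (eqVneq (l_v l1) (l_v l2)) => hv.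
        * rewrite hv subrr mul0r.
          case: (eqVneq (DG a b (base l1) (nvec l1)) 0) => h0; first by rewrite h0 mulr0.
          exfalso.
          have hn := HGn_nz hab hH1 hHp.
          pose r := - DG a b (base l1) (nvec l1) / HG a b (nvec l1).
          have hr : r != 0 by rewrite /r mulf_neq0 ?oppr_eq0 ?invr_eq0.
          have : GG a b (padd (base l1) (padd (psc 0 (dir l1)) (psc r (nvec l1)))) + lam = 0.
            rewrite GG_line2 hH1 hD1.
            apply: (eq_from 1 hG1); rewrite /r; field; done.
          move/onl => /(_ hv).
          rewrite lin_padd base_on lin0_padd !lin0_psc lin0_dir lin0_det.
          by move/eqP; rewrite mulr0 !add0r mulrN oppr_eq0 mulf_eq0 (negPf hr) (negPf hc).
        * set w2 := psub (base l2) (base l1).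
          have [f1 f2] := par_formulas hH1 hHp hD1 w2.
          have dw : det (dir l1) w2 = - (l_v l1 - l_v l2).
            have := lin_on_det w2 (base_on l1); rewrite /w2 padd_psub => h.
            have : lin l1 (base l2) = lin l2 (base l2) + (l_v l1 - l_v l2) by rewrite /lin ht hu; ring.
            by rewrite base_on add0r h => <-; rewrite opprK.
          have e0 : DG a b (base l1) w2 + HG a b w2 = 0.
            have := hG2; rewrite -{1}(padd_psub (base l2) (base l1)) GG_padd -/w2 => h.
            by apply: (eq_from 1 h); apply: (eq_from (-1) hG1); ring.
          have hv' : l_v l1 - l_v l2 != 0 by rewrite subr_eq0.
          have f1' : det (dir l1) (nvec l1) * DG a b (base l1) w2 + (l_v l1 - l_v l2) * DG a b (base l1) (nvec l1) = 0.
            by rewrite f1 dw; ring.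
          have f2' : det (dir l1) (nvec l1) ^+ 2 * HG a b w2 - (l_v l1 - l_v l2) ^+ 2 * HG a b (nvec l1) = 0.
            by rewrite f2 dw; ring.
          apply: (mulfI hv'); apply: (eq_from (- (det (dir l1) (nvec l1) ^+ 2)) e0).
          apply: (eq_from (det (dir l1) (nvec l1)) f1'); apply: (eq_from 1 f2'); ring.
      have [k [hk hid]] := par_core hab ht hu hH1 hHp hD1 hrel.
      exists k; split => //; split.
        by move=> p; rewrite -hid; apply: (eq_from 1 hG1); ring.
      change (qform A B A' B' (dir l1) (dir l2) = 0); rewrite hdir.
      have hn0 : HpG a b (dir l1) (nvec l1) = 0 := hHp _.
      have := det2 hab hH1 hn0 => h.
      have := I2 (dir l1) (nvec l1) => h'.
      have : det (dir l1) (nvec l1) * qform A B A' B' (dir l1) (dir l1) = 0 by rewrite -h'; apply: (eq_from (-1) h); ring.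
      by move/eqP; rewrite mulf_eq0 (negPf hc) /= => /eqP.
    + have [k [hk hid]] := np_ident hab hp hH1 hH2 hD1 hD2.
      have hX : GG a b (meet l1 l2) + lam = 0 by apply: hv1; exact: (meet_on hp).1.
      exists k; split => //; split.
        by move=> p; rewrite -hid; apply: (eq_from 1 hX); ring.
      change (qform A B A' B' (dir l1) (dir l2) = 0).
      have := det2 hab hH1 hH2 => h.
      have : det (dir l1) (dir l2) * qform A B A' B' (dir l1) (dir l2) = 0.
        by rewrite -I1; apply: (eq_from (-1) h); ring.
      by move/eqP; rewrite mulf_eq0 (negPf (det_par hp)) /= => /eqP.
  split => //; split => //; split => //.
  have hcen : forall (w1 w2 w3 w4 x1 x2 x3 x4 : K * K),
      padd w1 w2 = padd x1 x2 -> padd w3 w4 = padd x3 x4 ->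
      midpoint (midpoint w1 w3) (midpoint w2 w4) =
      ((x1.1 + x2.1 + x3.1 + x4.1) / 4, (x1.2 + x2.2 + x3.2 + x4.2) / 4).
    move=> w1 w2 w3 w4 v1 v4 v2 v3 E1 E3; rewrite /padd in E1 E3.
    case: E1 => e1 e2; case: E3 => e3 e4; rewrite /midpoint /=; congr pair.
    + have -> : ((w1.1 + w3.1) / 2 + (w2.1 + w4.1) / 2) / 2 = ((w1.1 + w2.1) + (w3.1 + w4.1)) / 4 by fld.
      rewrite e1 e3; fld.
    + have -> : ((w1.2 + w3.2) / 2 + (w2.2 + w4.2) / 2) / 2 = ((w1.2 + w2.2) + (w3.2 + w4.2)) / 4 by fld.
      rewrite e2 e4; fld.
  have cenA : centroid A B A' B' = (((meet A B).1 + (meet B' A).1 + (meet B A').1 + (meet A' B').1) / 4,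
      ((meet A B).2 + (meet B' A).2 + (meet B A').2 + (meet A' B').2) / 4).
    rewrite /centroid; move: (meet A B) (meet B A') (meet A' B') (meet B' A) => v1 v2 v3 v4 /=.
    congr pair; ring.
  have cenB : centroid A B A' B' = (((meet A B).1 + (meet B A').1 + (meet B' A).1 + (meet A' B').1) / 4,
      ((meet A B).2 + (meet B A').2 + (meet B' A).2 + (meet A' B').2) / 4).
    rewrite /centroid; move: (meet A B) (meet B A') (meet A' B') (meet B' A) => v1 v2 v3 v4 /=.
    congr pair; ring.
  case: (eqVneq b 0) => hb.
  + have ha : a != 0 by case: hab; rewrite // hb eqxx.
    have hB1 : forall p, lin B p = 0 -> a * (lin A p * lin A' p) + lam = k * (lin l1 p * lin l2 p).
      by move=> p h; rewrite -hid /GG h hb; ring.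
    have hB2 : forall p, lin B' p = 0 -> a * (lin A p * lin A' p) + lam = k * (lin l1 p * lin l2 p).
      by move=> p h; rewrite -hid /GG h hb; ring.
    have [p1 p2 s1] := root_sum1 ha nBA nBA' hB1.
    have [q1 q2 s2] := root_sum1 ha nB'A nB'A' hB2.
    exists (midpoint (meet l1 B) (meet l1 B')), (midpoint (meet l2 B) (meet l2 B')); split.
    * by right; split; [apply: cross_of | rewrite /mid (negPf p1) (negPf q1)].
    * by right; split; [apply: cross_of | rewrite /mid (negPf p2) (negPf q2)].
    * rewrite cenB; apply: hcen.
      - by rewrite s1 (meetC nAB).
      - by rewrite s2 (meetC nA'B').
  + have hA1 : forall p, lin A p = 0 -> b * (lin B p * lin B' p) + lam = k * (lin l1 p * lin l2 p).
      by move=> p h; rewrite -hid /GG h; ring.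
    have hA2 : forall p, lin A' p = 0 -> b * (lin B p * lin B' p) + lam = k * (lin l1 p * lin l2 p).
      by move=> p h; rewrite -hid /GG h; ring.
    have [p1 p2 s1] := root_sum1 hb nAB nAB' hA1.
    have [q1 q2 s2] := root_sum1 hb nA'B nA'B' hA2.
    exists (midpoint (meet l1 A) (meet l1 A')), (midpoint (meet l2 A) (meet l2 A')); split.
    * by left; split; [apply: cross_of | rewrite /mid (negPf p1) (negPf q1)].
    * by left; split; [apply: cross_of | rewrite /mid (negPf p2) (negPf q2)].
    * rewrite cenA; apply: hcen.
      - by rewrite s1 (meetC nB'A).
      - by rewrite s2 (meetC nBA').
Qed.

End Q.
End S.

Unset Implicit Arguments.

Theorem theorem6p4 (K : fieldType) (hK : (2 : K) != 0)
    (A B A' B' : line K) (hQ : quadrilateral A B A' B') (l1 l2 : line K) :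
  Q_pair A B A' B' l1 l2 <->
  exists a b : K, (a != 0 \/ b != 0) /\
    degeneration (pencil_conic A B A' B' a b) l1 l2.
Proof.
case: hQ => _ [_ [_ [h1 h2 h3 h4]]].
have n1 : ~~ parallel A B by apply/negP.
have n2 : ~~ parallel B A' by apply/negP.
have n3 : ~~ parallel A' B' by apply/negP.
have n4 : ~~ parallel B' A by apply/negP.
exact: (main_Q hK n1 n2 n3 n4).
Qed.
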